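(* Let $R$ be a commutative ring and $p$ a prime. Define $I_0=R$ and, for $i>0$, $I_i=\{r\in R: r^p\in pI_{i-1}\}$. Then for each $i\ge0$ the set $I_i$ is an ideal of $R$. *)

(* Defs.v *)
From mathcomp Require Import all_boot all_algebra.
Set Implicit Arguments. Unset Strict Implicit. Unset Printing Implicit Defensive.
Import GRing.Theory.
Local Open Scope ring_scope.

Fixpoint Iseq (R : comPzRingType) (p : nat) (i : nat) : R -> Prop :=
  match i with
  | 0 => fun _ => True
  | i'.+1 => fun r => exists2 x : R, Iseq p i' x & r ^+ p = p%:R * x
  end.

Definition is_ideal (R : comPzRingType) (S : R -> Prop) : Prop :=
  [/\ S 0,
      (forall x y, S x -> S y -> S (x + y)),
      (forall x, S x -> S (- x)) &
      (forall a x, S x -> S (a * x))].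

(* Main.v *)
Require Import Defs.
From mathcomp Require Import all_boot all_algebra zify.
Import GRing.Theory.
Local Open Scope ring_scope.

Lemma Iseq_mono (R : comPzRingType) (p : nat) (i : nat) (r : R) :
  Iseq p i.+1 r -> Iseq p i r.
Proof.
elim: i r => [//|i IH] r [x Hx Hr]; exists x => //; exact: IH.
Qed.

Lemma Iseq_sum (R : comPzRingType) (p i : nat) (n : nat) (F : 'I_n -> R) :
  Iseq (R:=R) p i 0 -> (forall x y : R, Iseq p i x -> Iseq p i y -> Iseq p i (x + y)) ->
  (forall k, Iseq (R:=R) p i (F k)) -> Iseq p i (\sum_(k < n) F k).
Proof.
move=> H0 HD HF; elim/big_ind: _ => //; exact: HF.
Qed.

Theorem lemma2p2 (R : comPzRingType) (p : nat) (hp : prime p) (i : nat) :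
  is_ideal (Iseq (R:=R) p i).
Proof.
have p2 := prime_gt1 hp.
move: p hp p2 => [|[|q]] hp p2 //.
elim: i => [|i [I0 ID IN IM]]; first by split.
split.
- by exists 0 => //; rewrite mulr0 expr0n.
- move=> x y [a Ha Hx] [b Hb Hy].
  have xI : Iseq (R:=R) q.+2 i x by apply: Iseq_mono; exists a.
  pose z := \sum_(k < q.+1) (x ^+ (q.+2 - k.+1) * y ^+ k.+1 *+ ('C(q.+2, k.+1) %/ q.+2)).
  exists (a + b + z).
    apply: (ID _ _ (ID _ _ Ha Hb)).
    apply: Iseq_sum => // k.
    have -> : x ^+ (q.+2 - k.+1) * y ^+ k.+1 *+ ('C(q.+2, k.+1) %/ q.+2)
       = (x ^+ (q.+2 - k.+2) * y ^+ k.+1 *+ ('C(q.+2, k.+1) %/ q.+2)) * x.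
      rewrite mulrnAl; congr (_ *+ _).
      rewrite mulrAC -exprSr subnSK //; exact: ltn_ord k.
    exact: IM.
  rewrite exprDn big_ord_recr big_ord_recl /= subn0 subnn expr0 mulr1 mul1r
    bin0 binn !mulr1n mulrDr mulrDr -Hx -Hy.
  rewrite [_ + y ^+ _]addrC addrA; congr (_ + _).
  rewrite [RHS]addrC; congr (_ + _).
  rewrite /z mulr_sumr; apply: eq_bigr => k _.
  rewrite /bump leq0n add1n mulr_natl -mulrnA divnK //.
  by apply: prime_dvd_bin => //; rewrite ltn0Sn /= ltnS (ltn_ord k).
- move=> x [a Ha Hx]; exists ((-1) ^+ q.+2 * a); first exact: IM.
  by rewrite [LHS]exprNn Hx mulrCA.
- move=> c x [a Ha Hx]; exists (c ^+ q.+2 * a); first exact: IM.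
  by rewrite [LHS]exprMn Hx mulrCA.
Qed.
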